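(* Let $F$ be a Sturmian set on an alphabet $A$ with $k$ letters. For any finite $F$-maximal bifix code $X\subset F$, one has $\mathrm{Card}(X)=(k-1)\,d_F(X)+1$.
   Context: For a set $F$ of words and a word $u\in F$, $u$ is right-special if $ua\in F$ for at least two letters $a$. An infinite word $x$ over $A$ is episturmian if its set of factors $F(x)$ is closed under reversal and contains, for each $n\ge1$, at most one right-special word of length $n$; it is strict episturmian if moreover it has exactly one right-special factor of each length and every right-special factor $u$ satisfies $ua\in F(x)$ for all $a\in A$. A Sturmian set is the set of factors of a strict episturmian word. A bifix code is a set of nonempty words none of which is a proper prefix or proper suffix of another; $X\subset F$ is $F$-maximal bifix if not properly contained in a bifix code contained in $F$. A parse of $w$ with respect to $X$ is a triple $(v,x,u)$ with $w=vxu$, $v$ having no suffix in $X$, $x\in X^*$, $u$ having no prefix in $X$; $\delta_X(w)$ is the number of parses, and $d_F(X)=\max_{w\in F}\delta_X(w)$. *)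

(* Defs.v *)
From mathcomp Require Import all_boot.
Set Implicit Arguments. Unset Strict Implicit. Unset Printing Implicit Defensive.

Section Words.
Variable A : finType.

Definition infword := nat -> A.

Definition factor (x : infword) (w : seq A) : Prop :=
  exists i, w = mkseq (fun j => x (i + j)) (size w).

Definition right_special (F : seq A -> Prop) (u : seq A) : Prop :=
  F u /\ exists a b : A, a <> b /\ F (rcons u a) /\ F (rcons u b).

Definition episturmian (x : infword) : Prop :=
  (forall w, factor x w -> factor x (rev w)) /\
  (forall n, 1 <= n -> forall u v, size u = n -> size v = n ->
      right_special (factor x) u -> right_special (factor x) v -> u = v).

Definition strict_episturmian (x : infword) : Prop :=
  episturmian x /\
  (forall n, 1 <= n -> exists u, size u = n /\ right_special (factor x) u) /\
  (forall u, right_special (factor x) u -> forall a : A, factor x (rcons u a)).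

Definition sturmian_set (F : seq A -> Prop) : Prop :=
  exists x, strict_episturmian x /\ forall w, F w <-> factor x w.

Definition bifix_code (Y : seq A -> Prop) : Prop :=
  (forall u, Y u -> u <> [::]) /\
  (forall u v, Y u -> Y v -> prefix u v -> u = v) /\
  (forall u v, Y u -> Y v -> suffix u v -> u = v).

Definition F_maximal_bifix (F : seq A -> Prop) (X : seq A -> Prop) : Prop :=
  bifix_code X /\ (forall u, X u -> F u) /\
  (forall Y, bifix_code Y -> (forall u, Y u -> F u) ->
     (forall u, X u -> Y u) -> forall u, Y u -> X u).

(* Membership in X^* for a finite set X (given as a seq), by recursion on
   a fuel bounding the length; each factor in X consumed is nonempty in the
   decomposition (the k.+1 prefix), so fuel = size w suffices. *)
Fixpoint star_aux (X : seq (seq A)) (n : nat) (w : seq A) : bool :=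
  match n with
  | 0 => w == [::]
  | n'.+1 => (w == [::]) ||
      has (fun k => (take k.+1 w \in X) && star_aux X n' (drop k.+1 w))
          (iota 0 (size w))
  end.

Definition in_star (X : seq (seq A)) (w : seq A) : bool := star_aux X (size w) w.

Definition no_suffix_in (X : seq (seq A)) (v : seq A) : bool :=
  all (fun s => ~~ suffix s v) X.
Definition no_prefix_in (X : seq (seq A)) (u : seq A) : bool :=
  all (fun s => ~~ prefix s u) X.

(* delta_X(w): number of parses (v, x, u) of w, w = v x u, indexed by
   i = |v| and j = |v x|. *)
Definition delta (X : seq (seq A)) (w : seq A) : nat :=
  \sum_(i < (size w).+1) \sum_(j < (size w).+1)
     [&& i <= j, no_suffix_in X (take i w),
         in_star X (drop i (take j w)) & no_prefix_in X (drop j w)].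

End Words.

(* Main.v *)
Require Import Defs.
From mathcomp Require Import all_boot.
From Stdlib Require Import Classical.
Set Implicit Arguments. Unset Strict Implicit. Unset Printing Implicit Defensive.

Lemma sum_ord_count n (p : pred nat) :
  \sum_(i < n) (p i : nat) = count p (iota 0 n).
Proof.
elim: n => [|n IH]; first by rewrite big_ord0.
have -> : iota 0 n.+1 = iota 0 n ++ [:: n] by rewrite -addn1 iotaD.
by rewrite big_ord_recr IH count_cat /= addn0.
Qed.

Lemma cat_prefix_cmp (T : eqType) (a b c d : seq T) :
  a ++ b = c ++ d -> size a <= size c -> prefix a c.
Proof.
move=> E le; rewrite prefixE; apply/eqP.
have H : take (size a) (a ++ b) = take (size a) (c ++ d) by rewrite E.
rewrite take_size_cat // in H; rewrite {2}H take_cat; case: ltnP => h //.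
have e : size a = size c by apply/eqP; rewrite eqn_leq le h.
by rewrite e subnn take0 cats0 take_size.
Qed.

Lemma cat_suffix_cmp (T : eqType) (a b c d : seq T) :
  a ++ b = c ++ d -> size b <= size d -> suffix b d.
Proof.
move=> E le; rewrite -prefix_rev; apply: (@cat_prefix_cmp _ _ (rev a) _ (rev c)).
  by rewrite -!rev_cat E.
by rewrite !size_rev.
Qed.

Lemma catIs (T : eqType) (a b c : seq T) : a ++ c = b ++ c -> a = b.
Proof.
move=> E; have s : size a = size b by have := congr1 size E; rewrite !size_cat => /addIn.
by move/eqP: E; rewrite eqseq_cat // => /andP [/eqP].
Qed.

Lemma catsI (T : eqType) (a b c : seq T) : c ++ a = c ++ b -> a = b.
Proof. by move=> E; have := congr1 (drop (size c)) E; rewrite !drop_size_cat. Qed.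

Lemma dropl_cat (T : eqType) n (s1 s2 : seq T) :
  n <= size s1 -> drop n (s1 ++ s2) = drop n s1 ++ s2.
Proof.
rewrite drop_cat; case: ltnP => // h1 h2.
have e : n = size s1 by apply/eqP; rewrite eqn_leq h1 h2.
by rewrite e subnn drop0 drop_size.
Qed.

Lemma take_catD (T : eqType) n (s1 s2 : seq T) :
  take (size s1 + n) (s1 ++ s2) = s1 ++ take n s2.
Proof. by rewrite take_cat ltnNge leq_addr /= addKn. Qed.

Lemma drop_catD (T : eqType) n (s1 s2 : seq T) :
  drop (size s1 + n) (s1 ++ s2) = drop n s2.
Proof. by rewrite drop_cat ltnNge leq_addr /= addKn. Qed.

Lemma count_one (T : eqType) (s : seq T) (p : pred T) i0 :
  uniq s -> i0 \in s -> p i0 -> (forall j, j \in s -> p j -> j = i0) ->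
  count p s = 1.
Proof.
move=> us i0s pi0 H.
rewrite (@eq_in_count _ _ (pred1 i0)); first by rewrite count_uniq_mem // i0s.
move=> j js /=; apply/idP/eqP => [pj|->//]; exact: H.
Qed.

Lemma count_le_bound (p : pred nat) m n : m <= n ->
  count (fun j => (j <= m) && p j) (iota 0 n.+1) = count p (iota 0 m.+1).
Proof.
move=> mn; rewrite -(subnKC mn) -addSn iotaD count_cat add0n.
rewrite (@eq_in_count _ _ p); last by move=> j; rewrite mem_iota /= add0n ltnS => ->.
rewrite [count _ (iota m.+1 _)](@eq_in_count _ _ pred0) ?count_pred0 ?addn0 //.
by move=> j; rewrite mem_iota ltnNge => /andP [/negbTE -> _].
Qed.

Lemma count_ge_bound (p : pred nat) i n : i <= n ->
  count (fun j => (i <= j) && p j) (iota 0 n.+1) = count (fun k => p (i + k)) (iota 0 (n - i).+1).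
Proof.
move=> hi; rewrite -{1}(subnKC hi) -addnS iotaD count_cat add0n.
rewrite [count _ (iota 0 i)](@eq_in_count _ _ pred0); last by move=> j; rewrite mem_iota /= add0n ltnNge => /negbTE ->.
have -> : iota i (n - i).+1 = map (addn i) (iota 0 (n - i).+1) by rewrite -iotaDl addn0.
rewrite count_pred0 add0n count_map.
by apply: eq_in_count => k _ /=; rewrite leq_addr.
Qed.

Section Star.
Variables (A : finType) (X : seq (seq A)).
Hypothesis X0 : [::] \notin X.
Hypothesis Xpre : {in X &, forall u v, prefix u v -> u = v}.
Hypothesis Xsuf : {in X &, forall u v, suffix u v -> u = v}.

Inductive star : seq A -> Prop :=
 | star0 : star [::]
 | starC u w : u \in X -> star w -> star (u ++ w).

Lemma Xne u : u \in X -> u <> [::].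
Proof. by move=> uX E; move: X0; rewrite -E uX. Qed.

Lemma star_auxP n w : size w <= n -> star_aux X n w <-> star w.
Proof.
elim: n w => [|n IH] w.
  rewrite leqn0 => /nilP -> /=; split=> // _; exact: star0.
move=> hs /=; split.
  case/orP => [/eqP -> | /hasP [k]]; first exact: star0.
  rewrite mem_iota => /andP [_ hk] /andP [hX hr].
  rewrite -(cat_take_drop k.+1 w); apply: starC => //.
  apply/(IH _ _).1 => //; rewrite size_drop; move: hs hk; case: (size w) => // m.
  by rewrite ltnS subSS => h _; apply: leq_trans (leq_subr _ _) h.
move=> sw; case: sw hs => [|u w' uX sw'] hs; first by rewrite eqxx.
apply/orP; right; apply/hasP.
have su : 0 < size u by case: u uX {hs} => // /Xne.
exists (size u).-1.
  by rewrite mem_iota /= size_cat add0n; apply: leq_trans (leq_addr (size w') (size u)); rewrite prednK.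
rewrite prednK // take_size_cat // drop_size_cat // uX /=.
apply/(IH _ _).2 => //; move: hs; rewrite size_cat.
by case: (size u) su => // m _; rewrite addSn ltnS => h; apply: leq_trans h; rewrite leq_addl.
Qed.

Lemma in_starP w : in_star X w <-> star w.
Proof. exact: star_auxP. Qed.

Lemma star_cat u v : star u -> star v -> star (u ++ v).
Proof. by elim=> // a w' aX _ IH sv; rewrite -catA; apply: starC => //; apply: IH. Qed.

Lemma star1 x : x \in X -> star x.
Proof. by move=> xX; rewrite -(cats0 x); apply: starC => //; exact: star0. Qed.

Lemma star_last w : star w -> w <> [::] ->
  exists w' x, [/\ x \in X, star w' & w = w' ++ x].
Proof.
elim=> // u v uX sv IH _.
case: (altP (v =P [::])) => [-> | /eqP vn].
  by exists [::], u; rewrite cats0; split => //; exact: star0.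
have [w' [x [xX sw' ->]]] := IH vn.
by exists (u ++ w'), x; rewrite catA; split => //; apply: starC.
Qed.

Lemma star_cancel_r n y z u : size z <= n -> star y -> star z -> y = u ++ z -> star u.
Proof.
elim: n y z u => [|n IH] y z u.
  by rewrite leqn0 => /nilP -> sy _; rewrite cats0 => <-.
move=> hz sy sz E.
case: (altP (z =P [::])) => [zE | /eqP zn]; first by move: E; rewrite zE cats0 => <-.
have [z' [x [xX sz' zE]]] := star_last sz zn.
have yn : y <> [::].
  move=> yE; have := congr1 size E; rewrite yE zE !size_cat /=.
  by case: x xX {zE} => [/Xne //|a x'] _; rewrite /= !addnS => /eqP.
have [y' [x' [xX' sy' yE]]] := star_last sy yn.
have E2 : y' ++ x' = (u ++ z') ++ x by rewrite -yE E zE catA.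
have xx : x' = x.
  case: (leqP (size x') (size x)) => h.
    by apply: Xsuf => //; apply: (cat_suffix_cmp E2).
  by apply/esym; apply: Xsuf => //; apply: (cat_suffix_cmp (esym E2)); apply: ltnW.
move: E2; rewrite xx => /catIs E3.
apply: (IH y' z') => //.
move: hz; rewrite zE size_cat; case: x {zE E3 xx xX'} xX => [/Xne //|a x2] _.
by rewrite addnS ltnS => h; apply: leq_trans h; rewrite leq_addr.
Qed.

Lemma star_first z : star z -> z <> [::] ->
  exists u z', [/\ u \in X, star z' & z = u ++ z'].
Proof. by case=> [//|u z' uX sz'] _; exists u, z'. Qed.

Lemma Xsize u : u \in X -> 0 < size u.
Proof. by case: u => // /Xne. Qed.

Lemma star_cancel_l y v : star y -> star (y ++ v) -> star v.
Proof.
elim=> [//|u y' uX sy' IH]; rewrite -catA => H.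
have zn : u ++ (y' ++ v) <> [::].
  by move=> /(congr1 size); rewrite size_cat; have := Xsize uX; case: (size u).
have [u' [z' [u'X sz' E]]] := star_first H zn.
have uu : u = u'.
  case: (leqP (size u) (size u')) => h.
    by apply: Xpre => //; apply: (cat_prefix_cmp E).
  by apply/esym; apply: Xpre => //; apply: (cat_prefix_cmp (esym E)); apply: ltnW.
by apply: IH; move: E; rewrite uu => /catsI ->.
Qed.

Lemma nosuf_X a x : x \in X -> no_suffix_in X (a ++ x) = false.
Proof. by move=> xX; apply/negP => /allP /(_ x xX); rewrite suffix_suffix. Qed.

Lemma nopre_X a x : x \in X -> no_prefix_in X (x ++ a) = false.
Proof. by move=> xX; apply/negP => /allP /(_ x xX); rewrite prefix_prefix. Qed.

Lemma nosuf0 : no_suffix_in X [::].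
Proof. by apply/allP => x xX; rewrite suffixs0; apply/eqP => E; move: X0; rewrite -E xX. Qed.

Lemma nopre0 : no_prefix_in X [::].
Proof. by apply/allP => x xX; rewrite prefixs0; apply/eqP => E; move: X0; rewrite -E xX. Qed.

Lemma nosufN t : ~~ no_suffix_in X t -> exists t' x, x \in X /\ t = t' ++ x.
Proof.
rewrite /no_suffix_in -has_predC => /hasP [x xX /= /negPn /suffixP [t' ->]].
by exists t', x.
Qed.

Lemma nopreN t : ~~ no_prefix_in X t -> exists t' x, x \in X /\ t = x ++ t'.
Proof.
rewrite /no_prefix_in -has_predC => /hasP [x xX /= /negPn /prefixP [t' ->]].
by exists t', x.
Qed.

Lemma left_ex t : exists i, [/\ i <= size t, no_suffix_in X (take i t) & star (drop i t)].
Proof.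
move: {2}(size t) (leqnn (size t)) => n; elim: n t => [|n IH] t hs.
  move: hs; rewrite leqn0 => /nilP ->; exists 0; split => //; [exact: nosuf0|exact: star0].
case: (boolP (no_suffix_in X t)) => h.
  by exists (size t); rewrite take_size drop_size; split => //; exact: star0.
have [t' [x [xX E]]] := nosufN h.
have st : size t' <= n.
  by move: hs; rewrite E size_cat; have := Xsize xX; case: (size x) => // m _; rewrite addnS ltnS => hh; exact: leq_trans (leq_addr _ _) hh.
have [i [hi h1 h2]] := IH t' st.
exists i; rewrite E takel_cat // dropl_cat //; split => //.
  by rewrite size_cat (leq_trans hi) // leq_addr.
by apply: star_cat => //; apply: star1.
Qed.

Lemma right_ex t : exists j, [/\ j <= size t, star (take j t) & no_prefix_in X (drop j t)].
Proof.
move: {2}(size t) (leqnn (size t)) => n; elim: n t => [|n IH] t hs.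
  move: hs; rewrite leqn0 => /nilP ->; exists 0; split => //; [exact: star0|exact: nopre0].
case: (boolP (no_prefix_in X t)) => h.
  by exists 0; rewrite take0 drop0; split => //; exact: star0.
have [t' [x [xX E]]] := nopreN h.
have st : size t' <= n.
  by move: hs; rewrite E size_cat; have := Xsize xX; case: (size x) => // m _; rewrite addSn ltnS => hh; exact: leq_trans (leq_addl _ _) hh.
have [j [hj h1 h2]] := IH t' st.
exists (size x + j); rewrite E take_catD drop_catD; split => //.
  by rewrite size_cat leq_add2l.
by apply: starC.
Qed.

Lemma left_uniq t i i' : i < i' -> i' <= size t ->
  no_suffix_in X (take i t) -> star (drop i t) ->
  no_suffix_in X (take i' t) -> star (drop i' t) -> False.
Proof.
move=> ii hi' _ s1 n2 s2.
set u := drop i (take i' t).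
have Ey : drop i t = u ++ drop i' t.
  have mi : minn i' (size t) = i' by apply/minn_idPl.
  by rewrite -{1}(cat_take_drop i' t) dropl_cat // size_take_min mi ltnW.
have su : star u by apply: (@star_cancel_r (size (drop i' t)) _ _ _ (leqnn _) s1 s2).
have un : u <> [::].
  move=> /(congr1 size); rewrite size_drop size_take_min.
  have -> : minn i' (size t) = i' by apply/minn_idPl.
  by move/eqP; rewrite subn_eq0 leqNgt ii.
have [u' [x [xX _ uE]]] := star_last su un.
have : take i' t = (take i t ++ u') ++ x.
  by rewrite -catA -uE /u -{1}(take_takel t (ltnW ii)) cat_take_drop.
by move=> E; move: n2; rewrite E nosuf_X.
Qed.

Lemma right_uniq t j j' : j < j' -> j' <= size t ->
  star (take j t) -> no_prefix_in X (drop j t) ->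
  star (take j' t) -> no_prefix_in X (drop j' t) -> False.
Proof.
move=> jj hj' s1 n1 s2 _.
set v := drop j (take j' t).
have Et : take j' t = take j t ++ v.
  by rewrite /v -{1}(take_takel t (ltnW jj)) cat_take_drop.
have sv : star v by apply: (star_cancel_l s1); rewrite -Et.
have vn : v <> [::].
  move=> /(congr1 size); rewrite size_drop size_take_min.
  have -> : minn j' (size t) = j' by apply/minn_idPl.
  by move/eqP; rewrite subn_eq0 leqNgt jj.
have [x [v' [xX _ vE]]] := star_first sv vn.
have : drop j t = x ++ (v' ++ drop j' t).
  rewrite catA -vE /v -{1}(cat_take_drop j' t) dropl_cat //.
  have mi : minn j' (size t) = j' by apply/minn_idPl.
  by rewrite size_take_min mi ltnW.
by move=> E; move: n1; rewrite E nopre_X.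
Qed.

Lemma left_parse t :
  count (fun i => no_suffix_in X (take i t) && in_star X (drop i t)) (iota 0 (size t).+1) = 1.
Proof.
have [i [hi h1 h2]] := left_ex t.
apply: (@count_one _ _ _ i); first exact: iota_uniq.
- by rewrite mem_iota.
- by rewrite h1; apply/in_starP.
move=> j; rewrite mem_iota add0n ltnS => /= hj /andP [n2 /in_starP s2].
case: (ltngtP i j) => // c; exfalso.
  exact: (left_uniq c hj h1 h2 n2 s2).
exact: (left_uniq c hi n2 s2 h1 h2).
Qed.

Lemma right_parse t :
  count (fun j => in_star X (take j t) && no_prefix_in X (drop j t)) (iota 0 (size t).+1) = 1.
Proof.
have [i [hi h1 h2]] := right_ex t.
apply: (@count_one _ _ _ i); first exact: iota_uniq.
- by rewrite mem_iota.
- by rewrite h2 andbT; apply/in_starP.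
move=> j; rewrite mem_iota add0n ltnS => /= hj /andP [/in_starP s2 n2].
case: (ltngtP i j) => // c; exfalso.
  exact: (right_uniq c hj h1 h2 s2 n2).
exact: (right_uniq c hi s2 n2 h1 h2).
Qed.


Lemma delta_D' w :
  delta X w = count (fun i => no_suffix_in X (take i w)) (iota 0 (size w).+1).
Proof.
rewrite /delta -sum_ord_count; apply: eq_bigr => i _.
rewrite (sum_ord_count (size w).+1 (fun j => [&& i <= j, no_suffix_in X (take i w),
     in_star X (drop i (take j w)) & no_prefix_in X (drop j w)])).
case: (no_suffix_in X (take i w)); last first.
  by rewrite (@eq_count _ _ pred0) ?count_pred0 // => j; rewrite andbF.
rewrite (@eq_count _ _ (fun j => (i <= j) && (in_star X (drop i (take j w)) && no_prefix_in X (drop j w)))) //.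
rewrite count_ge_bound; last by rewrite -ltnS.
rewrite -size_drop; transitivity 1; last by [].
rewrite -(right_parse (drop i w)); apply: eq_count => k /=.
by rewrite take_drop drop_drop (addnC k i).
Qed.

Lemma delta_D w :
  delta X w = count (fun j => no_prefix_in X (drop j w)) (iota 0 (size w).+1).
Proof.
rewrite /delta exchange_big -sum_ord_count; apply: eq_bigr => j _.
rewrite (sum_ord_count (size w).+1 (fun i => [&& i <= j, no_suffix_in X (take i w),
     in_star X (drop i (take j w)) & no_prefix_in X (drop j w)])).
case: (no_prefix_in X (drop j w)); last first.
  by rewrite (@eq_count _ _ pred0) ?count_pred0 // => i; rewrite !andbF.
have hj : j <= size w by rewrite -ltnS.
rewrite (@eq_count _ _ (fun i => (i <= j) && (no_suffix_in X (take i (take j w)) && in_star X (drop i (take j w))))).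
  rewrite count_le_bound //.
  have E : size (take j w) = j by rewrite size_take_min; apply/minn_idPl.
  by rewrite -[X in iota 0 X.+1]E left_parse.
move=> i /=; rewrite andbT; case: (leqP i j) => //= hij.
by rewrite take_takel.
Qed.

End Star.

Section Inf.
Variables (A : finType) (x : infword A).

Definition sub i n := mkseq (fun j => x (i + j)) n.

Lemma size_sub i n : size (sub i n) = n.
Proof. exact: size_mkseq. Qed.

Lemma sub_add i m n : sub i (m + n) = sub i m ++ sub (i + m) n.
Proof.
rewrite /sub /mkseq iotaD map_cat; congr (_ ++ _).
rewrite add0n -[m in iota m _]addn0 iotaDl -map_comp; apply: eq_map => k /=.
by rewrite addnA.
Qed.

Lemma take_sub i m n : m <= n -> take m (sub i n) = sub i m.
Proof. by move=> h; rewrite -(subnKC h) sub_add take_size_cat // size_sub. Qed.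

Lemma drop_sub i m n : m <= n -> drop m (sub i n) = sub (i + m) (n - m).
Proof. by move=> h; rewrite -{1}(subnKC h) sub_add drop_size_cat // size_sub. Qed.

Lemma factorP w : factor x w -> exists i, w = sub i (size w).
Proof. by case=> i E; exists i. Qed.

Lemma factor_sub i n : factor x (sub i n).
Proof. by exists i; rewrite size_sub. Qed.

Lemma factor_take w m : factor x w -> factor x (take m w).
Proof.
case=> i E; rewrite E; case: (leqP m (size w)) => h.
  rewrite take_sub //; exact: factor_sub.
rewrite take_oversize ?size_sub ?(ltnW h) //; exact: factor_sub.
Qed.

Lemma factor_drop w m : factor x w -> factor x (drop m w).
Proof.
case=> i E; rewrite E; case: (leqP m (size w)) => h.
  rewrite drop_sub //; exact: factor_sub.
by rewrite drop_oversize ?size_sub ?(ltnW h) //; exists 0.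
Qed.

Lemma factor_catl u v : factor x (u ++ v) -> factor x u.
Proof. by move=> /(factor_take (size u)); rewrite take_size_cat. Qed.

Lemma factor_catr u v : factor x (u ++ v) -> factor x v.
Proof. by move=> /(factor_drop (size u)); rewrite drop_size_cat. Qed.

Lemma factor_rext w : factor x w -> exists a, factor x (rcons w a).
Proof.
case=> i E; exists (x (i + size w)).
have -> : rcons w (x (i + size w)) = sub i (size w + 1).
  by rewrite sub_add {1}/sub -E -cats1 /sub /mkseq /= addn0.
exact: factor_sub.
Qed.

Hypothesis Hrev : forall w, factor x w -> factor x (rev w).

Lemma palin_or m : (exists2 j, 0 < j & sub j m = sub 0 m) \/
                   (exists2 n, m <= n & rev (sub 0 n) = sub 0 n).
Proof.
have [j Ej] := factorP (Hrev (factor_sub 0 m)).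
rewrite size_rev size_sub in Ej.
have [j' Ej'] := factorP (Hrev (factor_sub 0 (m + j))).
rewrite size_rev size_sub in Ej'.
have E1 : take m (rev (sub 0 (m + j))) = sub 0 m.
  by rewrite addnC sub_add rev_cat add0n -Ej revK take_size_cat // size_sub.
case: (posnP j') => hj'.
  right; exists (m + j); first exact: leq_addr.
  by rewrite Ej' hj'.
left; exists j' => //; rewrite -E1 Ej' take_sub //; exact: leq_addr.
Qed.

Lemma prefix_reoccurs m : exists2 j, 0 < j & sub j m = sub 0 m.
Proof.
case: (palin_or m) => [//|[n1 hn1 P1]].
case: (palin_or n1.+1) => [[j hj E]|[n2 hn2 P2]].
  exists j => //; rewrite -(take_sub j hn1) -(take_sub 0 hn1).
  by rewrite -(take_sub j (leqnSn n1)) -(take_sub 0 (leqnSn n1)) E.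
have h12 : n1 <= n2 by apply: ltnW.
have E : sub (n2 - n1) n1 = sub 0 n1.
  have := drop_sub 0 (leq_subr n1 n2); rewrite add0n subKn // => <-.
  rewrite -{1}P2 drop_rev size_sub subKn // take_sub // P1 //.
exists (n2 - n1); first by rewrite subn_gt0.
by rewrite -(take_sub (n2 - n1) hn1) E take_sub.
Qed.

Lemma prefix_far m B : exists2 j, B <= j & sub j m = sub 0 m.
Proof.
elim: B => [|B [j hj E]]; first by exists 0.
have [j2 hj2 E2] := prefix_reoccurs (j + m).
exists (j2 + j); first by rewrite -addn1 addnC leq_add.
have := congr1 (drop j) E2; rewrite !drop_sub ?leq_addr // addKn add0n E => <-.
by [].
Qed.

Lemma recurrent w B : factor x w -> exists2 j, B <= j & w = sub j (size w).
Proof.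
move/factorP=> [i E]; have [j hj Ej] := prefix_far (i + size w) B.
exists (j + i); first exact: leq_trans hj (leq_addr _ _).
have := congr1 (drop i) Ej; rewrite !drop_sub ?leq_addr // add0n addKn -E => ->.
by [].
Qed.

End Inf.

Lemma count_ge_mem (T : eqType) (p : pred T) s a : a \in s -> (p a : nat) <= count p s.
Proof. by case: (boolP (p a)) => //= pa ains; rewrite -has_count; apply/hasP; exists a. Qed.


Lemma sum_bool_count (T : eqType) (r : seq T) (a : pred T) :
  \sum_(j <- r) (a j : nat) = count a r.
Proof. by rewrite -sum1_count [RHS]big_mkcond; apply: eq_bigr => j _; case: (a j). Qed.

Lemma partition_count (T T' : eqType) (s : seq T) (P : seq T') (g : pred T) (f : T -> T') :
  uniq P -> (forall q, q \in s -> g q -> f q \in P) ->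
  \sum_(p <- P) count (fun q => g q && (f q == p)) s = count g s.
Proof.
move=> uP; elim: s => [|q s IH] H /=; first by rewrite big1.
rewrite big_split /= IH; last by move=> q' q's; apply: H; rewrite inE q's orbT.
congr (_ + _); case: (boolP (g q)) => gq /=; last by rewrite big1.
rewrite sum_bool_count (@eq_count _ _ (pred1 (f q))); last by move=> p /=; rewrite eq_sym.
by rewrite count_uniq_mem // H // mem_head.
Qed.

Lemma size_prefix (T : eqType) (u v : seq T) : prefix u v -> size u <= size v.
Proof. by move=> /prefixP [s ->]; rewrite size_cat leq_addr. Qed.

Lemma parent_rcons (T : eqType) (q : seq T) a : take (size (rcons q a)).-1 (rcons q a) = q.
Proof. by rewrite size_rcons /= -cats1 take_size_cat. Qed.

Section Main.
Variables (A : finType) (x : infword A) (X : seq (seq A)).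
Hypothesis Hrev : forall w, factor x w -> factor x (rev w).
Hypothesis X0 : [::] \notin X.
Hypothesis Xpre : {in X &, forall u v, prefix u v -> u = v}.
Hypothesis Xsuf : {in X &, forall u v, suffix u v -> u = v}.
Hypothesis XF : forall u, u \in X -> factor x u.
Hypothesis Xmax : forall Y, bifix_code Y -> (forall u, Y u -> factor x u) ->
  (forall u, u \in X -> Y u) -> forall u, Y u -> u \in X.

Let L := \max_(u <- X) size u.
Let nopre := no_prefix_in X.
Let nosuf := no_suffix_in X.
Let D w := count (fun j => nopre (drop j w)) (iota 0 (size w).+1).
Let D' w := count (fun i => nosuf (take i w)) (iota 0 (size w).+1).

Lemma sizeL u : u \in X -> size u <= L.
Proof. by move=> uX; rewrite /L; apply: (@leq_bigmax_seq _ X xpredT (fun u : seq A => size u) u uX). Qed.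

Lemma prefix_eq_size (u v : seq A) : prefix u v -> size v <= size u -> u = v.
Proof.
move=> /prefixP [s ->]; rewrite size_cat -{2}(addn0 (size u)) leq_add2l leqn0.
by move=> /nilP ->; rewrite cats0.
Qed.

Lemma suffix_eq_size (u v : seq A) : suffix u v -> size v <= size u -> u = v.
Proof.
move=> /suffixP [s ->]; rewrite size_cat -{2}(add0n (size u)) leq_add2r leqn0.
by move=> /nilP ->.
Qed.

Lemma incomparable y : factor x y -> 0 < size y -> L <= size y -> nopre y -> nosuf y -> False.
Proof.
move=> fy y0 Ly np ns.
pose Y := fun u => u \in X \/ u = y.
have bY : bifix_code Y.
  split; [|split].
  - move=> u [uX|->]; first exact: (Xne X0 uX).
    by move=> E; rewrite E in y0.
  - move=> u v [uX|->] [vX|->] puv //.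
    + exact: Xpre.
    + by move/allP: np => /(_ u uX); rewrite puv.
    + by apply: prefix_eq_size => //; exact: leq_trans (sizeL vX) Ly.
  - move=> u v [uX|->] [vX|->] puv //.
    + exact: Xsuf.
    + by move/allP: ns => /(_ u uX); rewrite puv.
    + by apply: suffix_eq_size => //; exact: leq_trans (sizeL vX) Ly.
have yX : y \in X.
  apply: (Xmax bY) => [u [uX|->] //|u uX|]; [exact: XF | by left | by right].
by move/allP: np => /(_ y yX); rewrite prefix_refl.
Qed.

Lemma X_nonempty : 0 < size X.
Proof.
case: (posnP (size X)) => // /size0nil E; exfalso.
apply: (@incomparable [:: x 0]) => //.
- by exists 0.
- by rewrite /L E big_nil.
- by rewrite /nopre E.
- by rewrite /nosuf E.
Qed.

Lemma L_pos : 0 < L.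
Proof.
have := X_nonempty; case E: X => [//|u X'] _.
have uX : u \in X by rewrite E mem_head.
exact: leq_trans (Xsize X0 uX) (sizeL uX).
Qed.

Lemma nopre_ext w s : nopre w -> L <= size w -> nopre (w ++ s).
Proof.
move=> np Lw; apply/allP => u uX; apply/negP => pu.
move/allP: np => /(_ u uX) /negP; apply; move: pu; rewrite !prefixE.
by rewrite (@takel_cat (size u) _ w s (leq_trans (sizeL uX) Lw)).
Qed.

Lemma nosuf_ext s w : nosuf w -> L <= size w -> nosuf (s ++ w).
Proof.
move=> ns Lw; apply/allP => u uX; apply/negP => /suffixP [t E].
move/allP: ns => /(_ u uX); rewrite (cat_suffix_cmp (esym E)) //.
exact: leq_trans (sizeL uX) Lw.
Qed.

Lemma D'_ext u r :
  (forall i, size u < i <= size u + size r -> ~~ nosuf (take i (u ++ r))) ->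
  D' (u ++ r) = D' u.
Proof.
move=> H; rewrite /D' size_cat -addSn iotaD count_cat add0n.
rewrite [count _ (iota (size u).+1 _)](@eq_in_count _ _ pred0); last first.
  move=> i; rewrite mem_iota addSn => /andP [h1 h2]; apply/negbTE; apply: H.
  by rewrite h1 -ltnS.
rewrite count_pred0 addn0; apply: eq_in_count => i.
by rewrite mem_iota add0n ltnS /= => hi; rewrite takel_cat.
Qed.

Lemma D_ext r v :
  (forall h, h < size r -> ~~ nopre (drop h (r ++ v))) -> D (r ++ v) = D v.
Proof.
move=> H; rewrite /D size_cat -addnS iotaD count_cat add0n.
rewrite [count _ (iota 0 _)](@eq_in_count _ _ pred0); last first.
  by move=> h; rewrite mem_iota add0n => /andP [_ h2]; apply/negbTE; apply: H.
rewrite count_pred0 add0n.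
have -> : iota (size r) (size v).+1 = map (addn (size r)) (iota 0 (size v).+1).
  by rewrite -iotaDl addn0.
by rewrite count_map; apply: eq_count => h /=; rewrite drop_catD.
Qed.

Lemma D_lext u t : 0 < size u -> (D t + nopre (u ++ t) <= D (u ++ t))%N.
Proof.
move=> u0; rewrite /D size_cat -addnS iotaD count_cat add0n addnC.
have -> : iota (size u) (size t).+1 = map (addn (size u)) (iota 0 (size t).+1).
  by rewrite -iotaDl addn0.
rewrite count_map [count (preim _ _) _](@eq_count _ _ (fun j => nopre (drop j t))); last first.
  by move=> h /=; rewrite drop_catD.
rewrite leq_add2r; apply: (@leq_trans (nopre (drop 0 (u ++ t)))); first by rewrite drop0.
by apply: (count_ge_mem (fun j => nopre (drop j (u ++ t)))); rewrite mem_iota.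
Qed.

Lemma D'_rext t u : 0 < size u -> (D' t + nosuf (t ++ u) <= D' (t ++ u))%N.
Proof.
move=> u0; rewrite /D' size_cat -addSn iotaD count_cat add0n.
have E1 : count (fun i => nosuf (take i (t ++ u))) (iota 0 (size t).+1) = D' t.
  by apply: eq_in_count => i; rewrite mem_iota add0n ltnS /= => hi; rewrite takel_cat.
rewrite E1 leq_add2l; apply: (@leq_trans (nosuf (take (size t + size u) (t ++ u)))).
  by rewrite -size_cat take_size.
apply: (count_ge_mem (fun i => nosuf (take i (t ++ u)))); rewrite mem_iota addSn ltnS leqnn andbT.
by rewrite -{1}(addn0 (size t)) ltn_add2l.
Qed.


Lemma DD' w : D w = D' w.
Proof. exact: etrans (esym (delta_D X0 Xsuf w)) (delta_D' X0 Xpre w). Qed.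

Lemma dD w : delta X w = D w.
Proof. exact: delta_D X0 Xsuf w. Qed.

Lemma sub_prefix i n m : n <= m -> sub x i m = sub x i n ++ drop n (sub x i m).
Proof. by move=> h; rewrite -{1}(cat_take_drop n (sub x i m)) take_sub. Qed.

Lemma sub_split i j m : i <= j -> sub x i (j - i + m) = sub x i (j - i) ++ sub x j m.
Proof. by move=> h; rewrite sub_add subnKC. Qed.

Lemma PC w : factor x w -> L <= size w -> ~~ nopre w.
Proof.
move=> fw Lw; apply/negP => np.
have w0 : 0 < size w by exact: leq_trans L_pos Lw.
have C1 : forall z, factor x (w ++ z) -> D' (w ++ z) = D' w.
  move=> z fz; apply: D'_ext => i /andP [h1 h2]; apply/negP => ns.
  have ht : take i (w ++ z) = w ++ take (i - size w) z.
    by rewrite take_cat ltnNge (ltnW h1).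
  have st : size (take i (w ++ z)) = i by rewrite size_take_min; apply/minn_idPl; rewrite size_cat.
  apply: (@incomparable (take i (w ++ z))).
  - exact: factor_take.
  - by rewrite st (leq_ltn_trans _ h1).
  - by rewrite st (leq_trans Lw (ltnW h1)).
  - by rewrite ht nopre_ext.
  - exact: ns.
have C2 : forall N B, exists i n z, [/\ B <= i, sub x i n = w ++ z & N <= D (w ++ z)].
  elim=> [|N IH] B.
    have [i hi Ei] := recurrent Hrev B fw.
    by exists i, (size w), [::]; rewrite cats0; split.
  have [i hi Ei] := recurrent Hrev B fw.
  have [i' [n' [z' [hi' E' HN]]]] := IH (i + size w).
  have ii : i <= i' by exact: leq_trans (leq_addr _ _) hi'.
  have sw : size w <= i' - i by rewrite leq_subRL.
  set mid := drop (size w) (sub x i (i' - i)).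
  exists i, (i' - i + n'), (mid ++ (w ++ z')); split => //.
    by rewrite sub_split // E' (sub_prefix i sw) -Ei -catA.
  have u0 : 0 < size (w ++ mid) by rewrite size_cat (leq_trans w0) // leq_addr.
  have := @D_lext (w ++ mid) (w ++ z') u0.
  rewrite -catA nopre_ext // addn1 => H; apply: leq_trans H; by rewrite ltnS.
have [i [n [z [_ Ez HN]]]] := C2 (D' w).+1 0.
have fz : factor x (w ++ z) by rewrite -Ez; exact: factor_sub.
by move: HN; rewrite DD' C1 // ltnn.
Qed.

Lemma SC w : factor x w -> L <= size w -> ~~ nosuf w.
Proof.
move=> fw Lw; apply/negP => ns.
have w0 : 0 < size w by exact: leq_trans L_pos Lw.
have C1 : forall z, factor x (z ++ w) -> D (z ++ w) = D w.
  move=> z fz; apply: D_ext => h hh; apply/negP => np.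
  have hd : drop h (z ++ w) = drop h z ++ w by rewrite dropl_cat // ltnW.
  have sz : L <= size (drop h (z ++ w)) by rewrite hd size_cat (leq_trans Lw) // leq_addl.
  apply: (@incomparable (drop h (z ++ w))).
  - exact: factor_drop.
  - exact: leq_trans L_pos sz.
  - exact: sz.
  - exact: np.
  - by rewrite hd nosuf_ext.
have C2 : forall N, exists i n z, sub x i n = z ++ w /\ N <= D' (z ++ w).
  elim=> [|N [i [n [z [Ez HN]]]]].
    have [i hi Ei] := recurrent Hrev 0 fw.
    by exists i, (size w), [::].
  have [j hj Ej] := recurrent Hrev (i + n) fw.
  have ij : i <= j by exact: leq_trans (leq_addr _ _) hj.
  have nj : n <= j - i by rewrite leq_subRL.
  set mid := drop n (sub x i (j - i)).
  exists i, (j - i + size w), ((z ++ w) ++ mid); split.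
    by rewrite sub_split // -Ej (sub_prefix i nj) Ez.
  have u0 : 0 < size (mid ++ w) by rewrite size_cat (leq_trans w0) // leq_addl.
  have := @D'_rext (z ++ w) (mid ++ w) u0.
  rewrite catA nosuf_ext // addn1 -catA => H; apply: leq_trans H; by rewrite ltnS.
have [i [n [z [Ez HN]]]] := C2 (D w).+1.
have fz : factor x (z ++ w) by rewrite -Ez; exact: factor_sub.
by move: HN; rewrite -DD' C1 // ltnn.
Qed.

Lemma const u v : factor x u -> factor x v -> L <= size u -> L <= size v ->
  delta X u = delta X v.
Proof.
move=> fu fv Lu Lv.
have [i Ei] := factorP fu.
have [j hj Ej] := recurrent Hrev (i + size u) fv.
have ij : i <= j by exact: leq_trans (leq_addr _ _) hj.
have nj : size u <= j - i by rewrite leq_subRL.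
set mid := drop (size u) (sub x i (j - i)).
have Ez : sub x i (j - i + size v) = (u ++ mid) ++ v.
  by rewrite sub_split // -Ej (sub_prefix i nj) -Ei.
have fz : factor x ((u ++ mid) ++ v) by rewrite -Ez; exact: factor_sub.
have E1 : D ((u ++ mid) ++ v) = D v.
  apply: D_ext => h hh; apply: PC; first exact: factor_drop.
  by rewrite dropl_cat ?(ltnW hh) // size_cat (leq_trans Lv) // leq_addl.
have E2 : D' ((u ++ mid) ++ v) = D' u.
  rewrite -catA; apply: D'_ext => k /andP [h1 h2]; apply: SC.
    by apply: factor_take; rewrite catA.
  rewrite size_take_min leq_min (leq_trans Lu (ltnW h1)) /=.
  by rewrite size_cat (leq_trans Lu) // leq_addr.
by rewrite !dD DD' -E2 -DD' E1.
Qed.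

Lemma dmax w w0 : factor x w -> factor x w0 -> L <= size w0 -> delta X w <= delta X w0.
Proof.
move=> fw fw0 Lw0.
have [i Ei] := factorP fw.
have E : sub x i (size w + L) = w ++ sub x (i + size w) L by rewrite sub_add -Ei.
rewrite -(@const (w ++ sub x (i + size w) L) w0) //; last first.
- by rewrite size_cat size_sub leq_addl.
- by rewrite -E; exact: factor_sub.
rewrite !dD !DD'; apply: leq_trans (D'_rext _ _); first exact: leq_addr.
by rewrite size_sub L_pos.
Qed.


Hypothesis Xuniq : uniq X.
Hypothesis RSall : forall u, right_special (factor x) u -> forall a, factor x (rcons u a).
Hypothesis RSuniq : forall u v, size u = size v -> right_special (factor x) u ->
  right_special (factor x) v -> u = v.
Hypothesis RSex : forall n, exists u, size u = n /\ right_special (factor x) u.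
Hypothesis A2 : 1 < #|A|.

Let P := undup (flatten (map (fun u => map (fun i => take i u) (iota 0 (size u))) X)).

Lemma memP p : reflect (exists2 u, u \in X & exists2 i, i < size u & p = take i u) (p \in P).
Proof.
rewrite mem_undup; apply: (iffP flatten_mapP) => [[u uX /mapP [i hi ->]]|[u uX [i hi ->]]].
  by exists u => //; exists i => //; rewrite mem_iota in hi.
by exists u => //; apply/mapP; exists i => //; rewrite mem_iota.
Qed.

Lemma P_nopre p : p \in P -> nopre p.
Proof.
case/memP => u uX [i hi ->]; apply/allP => v vX; apply/negP => pv.
have vu : v = u by apply: Xpre => //; exact: prefix_trans pv (prefix_take _ _).
have := size_prefix pv; rewrite vu size_take_min => h.
by move: (leq_trans h (geq_minl _ _)); rewrite leqNgt hi.
Qed.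

Lemma P_factor p : p \in P -> factor x p.
Proof. by case/memP => u uX [i hi ->]; apply: factor_take; apply: XF. Qed.

Lemma P_size p : p \in P -> size p < L.
Proof.
case/memP => u uX [i hi ->]; rewrite size_take_min.
exact: leq_ltn_trans (geq_minl _ _) (leq_trans hi (sizeL uX)).
Qed.

Lemma factor_nopre_P p : factor x p -> nopre p -> p \in P.
Proof.
move=> fp np; have [i Ei] := factorP fp.
have E : sub x i (size p + L) = p ++ sub x (i + size p) L by rewrite sub_add -Ei.
have := @PC (sub x i (size p + L)) (factor_sub _ _ _); rewrite size_sub leq_addl => /(_ isT).
case/nopreN => t' [v [vX Ev]]; rewrite E in Ev.
case: (leqP (size v) (size p)) => h.
  by move/allP: np => /(_ v vX); rewrite (cat_prefix_cmp (esym Ev) h).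
have pv : prefix p v by apply: (cat_prefix_cmp Ev); apply: ltnW.
apply/memP; exists v => //; exists (size p) => //.
by move: pv; rewrite prefixE => /eqP ->.
Qed.

Lemma P_nil : [::] \in P.
Proof.
have := X_nonempty; case E: X => [//|u X'] _.
have uX : u \in X by rewrite E mem_head.
by apply/memP; exists u => //; exists 0; rewrite ?take0 // (Xsize X0 uX).
Qed.

Lemma PX_disj p : p \in P -> p \in X -> False.
Proof. by move=> /P_nopre /allP np pX; move: (np p pX); rewrite prefix_refl. Qed.

Let Q := P ++ X.

Lemma Q_uniq : uniq Q.
Proof.
rewrite cat_uniq undup_uniq Xuniq andbT /=; apply/hasPn => q qX; apply/negP => qP.
exact: PX_disj qP qX.
Qed.

Lemma Q_parent q : q \in Q -> q <> [::] -> take (size q).-1 q \in P.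
Proof.
rewrite mem_cat => /orP [/memP [u uX [i hi ->]]|qX] qn.
  apply/memP; exists u => //; exists (size (take i u)).-1.
    by rewrite size_take_min; apply: leq_ltn_trans (leq_pred _) (leq_ltn_trans (geq_minl _ _) hi).
  by rewrite take_takel // size_take_min; exact: leq_trans (leq_pred _) (geq_minl _ _).
apply/memP; exists q => //; exists (size q).-1 => //.
by case: q qn {qX} => // a q _; rewrite /= leqnn.
Qed.

Lemma Q_factor q : q \in Q -> factor x q.
Proof. by rewrite mem_cat => /orP [/P_factor|/XF]. Qed.

Lemma ext_Q p a : p \in P -> factor x (rcons p a) -> rcons p a \in Q.
Proof.
move=> pP fpa; case: (boolP (nopre (rcons p a))) => h.
  by rewrite mem_cat factor_nopre_P.
case/nopreN: h => t' [v [vX Ev]].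
have Ev' : p ++ [:: a] = v ++ t' by rewrite cats1.
case: (leqP (size v) (size p)) => h.
  by move/allP: (P_nopre pP) => /(_ v vX); rewrite (cat_prefix_cmp (esym Ev') h).
have : size t' == 0.
  have := congr1 size Ev; rewrite size_rcons size_cat.
  by move: h; rewrite -ltnS => h E; move: h; rewrite E -addSn -{2}(addn0 (size v).+1) leq_add2l leqn0.
move/eqP/size0nil => t0; rewrite Ev t0 cats0 mem_cat vX orbT //.
Qed.

Let cnt p := count (fun a => rcons p a \in Q) (enum A).

Lemma children p : p \in P ->
  count (fun q => (q != [::]) && (take (size q).-1 q == p)) Q = cnt p.
Proof.
move=> pP; rewrite /cnt -!size_filter.
rewrite -(size_map (rcons p)); apply: perm_size; apply: uniq_perm.
- exact: filter_uniq Q_uniq.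
- by rewrite (map_inj_uniq (@rcons_injr _ p)) filter_uniq // enum_uniq.
move=> q; rewrite mem_filter; apply/idP/idP.
  case: (lastP q) => [|q' a] //=.
  rewrite parent_rcons => /andP [/andP [_ /eqP ->] qQ].
  by apply/mapP; exists a => //; rewrite mem_filter qQ mem_enum.
case/mapP => a; rewrite mem_filter => /andP [aQ _] ->.
by rewrite aQ parent_rcons eqxx andbT /=; case: (p) => [|? ?].
Qed.

Lemma cnt_RS p : p \in P ->
  (right_special (factor x) p -> cnt p = #|A|) /\ (~ right_special (factor x) p -> cnt p = 1).
Proof.
move=> pP; split => H.
  rewrite /cnt cardE -count_predT; apply: eq_in_count => a _ /=.
  by apply: ext_Q => //; apply: RSall.
have [a fa] := factor_rext (P_factor pP).
apply: (@count_one _ _ _ a); [exact: enum_uniq | by rewrite mem_enum | exact: ext_Q |].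
move=> b _ /= /Q_factor fb; case: (eqVneq b a) => // ba; exfalso; apply: H.
by split; [exact: P_factor | exists b, a; split => //; apply/eqP].
Qed.

Lemma cardXcode : size X = (#|A| - 1) * count (fun p => 1 < cnt p) P + 1.
Proof.
have S1 : count (fun q => q != [::]) Q =
          \sum_(p <- P) count (fun q => (q != [::]) && (take (size q).-1 q == p)) Q.
  by rewrite partition_count ?undup_uniq // => q qQ /eqP qn; apply: Q_parent.
have S0 : count (fun q => q == [::]) Q = 1.
  by rewrite (@eq_count _ _ (pred1 [::])) // count_uniq_mem ?Q_uniq // mem_cat P_nil.
have SQ : size Q = \sum_(p <- P) cnt p + 1.
  rewrite -(count_predC (fun q => q != [::])) S1 -S0.
  congr (_ + _); last by apply: eq_count => q /=; rewrite negbK.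
  by apply: eq_big_seq => p pP; rewrite children.
have S2 : \sum_(p <- P) cnt p = \sum_(p <- P) (1 + (#|A| - 1) * (1 < cnt p)).
  apply: eq_big_seq => p pP; have [h1 h2] := cnt_RS pP.
  case: (classic (right_special (factor x) p)) => H.
    by rewrite h1 // A2 muln1 subnKC // ltnW.
  by rewrite h2 // ltnn muln0.
move: SQ; rewrite S2 big_split /= sum1_size -big_distrr /= sum_bool_count size_cat.
by rewrite -addnA => /addnI.
Qed.

Lemma RS_drop u j : right_special (factor x) u -> j <= size u -> right_special (factor x) (drop j u).
Proof.
move=> [fu [a [b [ab [fa fb]]]]] hj; split; first exact: factor_drop.
by exists a, b; rewrite -!drop_rcons //; split => //; split; apply: factor_drop.
Qed.

Lemma delta_w0 w0 : size w0 = L -> right_special (factor x) w0 ->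
  delta X w0 = count (fun p => 1 < cnt p) P.
Proof.
move=> sw0 rs0; rewrite dD /D.
have fw0 : factor x w0 by case: rs0.
rewrite (@eq_in_count _ _ (fun j => drop j w0 \in P)); last first.
  move=> j _ /=; apply/idP/idP; last exact: P_nopre.
  by apply: factor_nopre_P; apply: factor_drop.
rewrite -(count_map (fun j => drop j w0) (mem P)) -!size_filter.
apply: perm_size; apply: uniq_perm.
- apply: filter_uniq; rewrite map_inj_in_uniq ?iota_uniq // => j j'.
  rewrite !mem_iota !add0n !ltnS => /andP [_ hj] /andP [_ hj'] E.
  have := congr1 size E; rewrite !size_drop => e.
  by rewrite -(subKn hj) e subKn.
- exact: filter_uniq (undup_uniq _).
move=> q; rewrite !mem_filter.
have -> : mem P q = (q \in P) by [].
case: (boolP (q \in P)) => qP; last by rewrite andbF.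
rewrite andbT andTb.
have [h1 h2] := cnt_RS qP.
apply/mapP/idP.
  case=> j; rewrite mem_iota add0n ltnS => /andP [_ hj] E.
  by rewrite h1 ?A2 // E; apply: RS_drop.
move=> c; case: (classic (right_special (factor x) q)) => H; last by move: c; rewrite h2.
have sq := P_size qP.
exists (L - size q); first by rewrite mem_iota add0n ltnS sw0 leq_subr.
apply: RSuniq => //; last by apply: RS_drop => //; rewrite sw0 leq_subr.
by rewrite size_drop sw0 subKn // ltnW.
Qed.

End Main.

Unset Implicit Arguments.

Theorem mainTheorem12 (A : finType) (F : seq A -> Prop) (X : seq (seq A)) :
  sturmian_set F -> uniq X ->
  F_maximal_bifix F (fun u => u \in X) ->
  exists w0, F w0 /\ (forall w, F w -> delta X w <= delta X w0) /\
    size X = (#|A| - 1) * delta X w0 + 1.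
Proof.
move=> [x [[[Hrev RSu1] [RSex1 RSall]] HF]] Xu [[X0' [Xpre' Xsuf']] [XF' Xmax']].
have X0 : [::] \notin X by apply/negP => /X0'.
have Xpre : {in X &, forall u v, prefix u v -> u = v} by move=> u v uX vX; apply: Xpre'.
have Xsuf : {in X &, forall u v, suffix u v -> u = v} by move=> u v uX vX; apply: Xsuf'.
have XF : forall u, u \in X -> factor x u by move=> u uX; apply/HF/XF'.
have Xmax : forall Y, bifix_code Y -> (forall u, Y u -> factor x u) ->
    (forall u, u \in X -> Y u) -> forall u, Y u -> u \in X.
  by move=> Y bY YF XY; apply: Xmax' => // u /YF /HF.
have [c [sc [fc [a [b [ab [fa fb]]]]]]] := RSex1 1 (leqnn 1).
have fa1 : factor x [:: a].
  by have := factor_drop 1 fa; case: c sc {fc fa fb} => // c1 [] //.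
have fb1 : factor x [:: b].
  by have := factor_drop 1 fb; case: c sc {fc fa fb fa1} => // c1 [] //.
have RS0 : right_special (factor x) [::].
  by split; [exists 0 | exists a, b].
have RSuniq : forall u v, size u = size v -> right_special (factor x) u ->
    right_special (factor x) v -> u = v.
  move=> u v; case: (posnP (size u)) => [/size0nil -> /esym /size0nil -> //|u0 suv].
  by apply: (RSu1 (size u)) => //.
have RSex : forall n, exists u, size u = n /\ right_special (factor x) u.
  by case=> [|n]; [exists [::] | apply: RSex1].
have A2 : 1 < #|A|.
  by apply/card_gt1P; exists a, b; split => //; apply/eqP.
set L := \max_(u <- X) size u.
have [w0 [sw0 rs0]] := RSex L.
have fw0 : factor x w0 by case: rs0.
exists w0; split; first by apply/HF.
split.
  move=> w /HF fw; apply: (dmax Hrev X0 Xpre Xsuf XF Xmax fw fw0).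
  by rewrite sw0.
rewrite (delta_w0 Hrev X0 Xpre Xsuf XF Xmax RSall RSuniq A2 sw0 rs0).
exact: (cardXcode Hrev X0 Xpre Xsuf XF Xmax Xu RSall A2).
Qed.
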